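(* Let $\mathfrak{G}$ be a compactly generated groupoid of germs. Then for every compact topological transversal $X\subset\mathfrak{G}^{(0)}$ there exists a compact set $S\subset\mathfrak{G}|_X$ such that $(S,X)$ is a compact generating pair of $\mathfrak{G}$.
   Context: $\mathfrak{G}$ is the groupoid of germs of a pseudogroup of homeomorphisms between open subsets of a locally compact metrizable space $\mathfrak{G}^{(0)}$ (germs $(F,x)$ with $\mathsf{o}(F,x)=x$, $\mathsf{t}(F,x)=F(x)$, germ topology). For $A\subset\mathfrak{G}^{(0)}$, $\mathfrak{G}|_A=\{g:\mathsf{o}(g),\mathsf{t}(g)\in A\}$. A set $X\subset\mathfrak{G}^{(0)}$ is a topological transversal if it contains an open set meeting every $\mathfrak{G}$-orbit. A compact generating pair is a pair $(S,X)$ of compact sets $S\subset\mathfrak{G}$, $X\subset\mathfrak{G}^{(0)}$, with $X$ a topological transversal, such that for every $g\in\mathfrak{G}|_X$ there is $n$ such that $\bigcup_{k=1}^n(S\cup S^{-1})^k$ is a neighborhood of $g$ in $\mathfrak{G}|_X$. $\mathfrak{G}$ is compactly generated if it has a compact generating pair. *)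

(* Defs.v *)
From HB Require Import structures.
From mathcomp Require Import all_boot all_order all_algebra.
From mathcomp Require Import all_classical all_reals all_analysis.
From mathcomp Require Import Rstruct Rstruct_topology.
Set Implicit Arguments. Unset Strict Implicit. Unset Printing Implicit Defensive.
Import Order.TTheory GRing.Theory Num.Theory.
Local Open Scope classical_set_scope.
Local Open Scope ring_scope.

Section Germs.
Variable T : topologicalType.

Definition loc_compact_space : Prop :=
  forall x : T, exists K : set T, compact K /\ nbhs x K.

Definition metrizable_space : Prop :=
  exists d : T -> T -> Rdefinitions.R,
    (forall x y, 0 <= d x y) /\ (forall x y, d x y = 0 <-> x = y) /\
    (forall x y, d x y = d y x) /\ (forall x y z, d x z <= d x y + d y z) /\
    (forall A : set T, open A <->
       (forall x, A x -> exists e : Rdefinitions.R, 0 < e /\ [set y | d x y < e] `<=` A)).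

Record phom := PHom { pdom : set T; pcod : set T; pfun : T -> T; pinv : T -> T }.

Definition is_phom (F : phom) : Prop :=
  open (pdom F) /\ open (pcod F) /\
  pfun F @` pdom F = pcod F /\ pinv F @` pcod F = pdom F /\
  (forall x, pdom F x -> pinv F (pfun F x) = x) /\
  (forall y, pcod F y -> pfun F (pinv F y) = y) /\
  {within pdom F, continuous (pfun F)} /\
  {within pcod F, continuous (pinv F)}.

Definition phom_id : phom := PHom setT setT id id.
Definition phom_inv (F : phom) : phom := PHom (pcod F) (pdom F) (pinv F) (pfun F).
Definition phom_comp (G H : phom) : phom :=
  PHom (pdom H `&` pfun H @^-1` pdom G)
       (pcod G `&` pinv G @^-1` pcod H)
       (pfun G \o pfun H) (pinv H \o pinv G).
Definition phom_restr (F : phom) (U : set T) : phom :=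
  PHom (pdom F `&` U) (pfun F @` (pdom F `&` U)) (pfun F) (pinv F).

Definition pseudogroup (P : set phom) : Prop :=
  (forall F, P F -> is_phom F) /\
      P phom_id /\
      (forall F, P F -> P (phom_inv F)) /\
      (forall G H, P G -> P H -> P (phom_comp G H)) /\
      (forall F U, P F -> open U -> P (phom_restr F U)) /\
      (forall F, is_phom F ->
         (forall x, pdom F x -> exists U, [/\ open U, U x & P (phom_restr F U)]) ->
         P F).

Variable P : set phom.

Definition germ_at (x : T) (f : T -> T) : set (T -> T) :=
  [set h | nbhs x [set y | h y = f y]].
Definition germ := (T * set (T -> T))%type.
Definition germ_of (F : phom) (x : T) : germ := (x, germ_at x (pfun F)).

Definition GG : set germ :=
  [set g | exists F x, [/\ P F, pdom F x & g = germ_of F x]].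
Definition Grestr (A : set T) : set germ :=
  [set g | exists F x, [/\ P F, pdom F x, A x, A (pfun F x) & g = germ_of F x]].

Definition gmul (A B : set germ) : set germ :=
  [set g | exists F H y, P F /\ P H /\ pdom H y /\ pdom F (pfun H y) /\
     B (germ_of H y) /\ A (germ_of F (pfun H y)) /\
     g = germ_of (phom_comp F H) y].
Definition ginv (A : set germ) : set germ :=
  [set g | exists F x, [/\ P F, pdom F x, A (germ_of F x) &
     g = germ_of (phom_inv F) (pfun F x)]].
Fixpoint gpow (A : set germ) (k : nat) : set germ :=
  match k with
  | 0 => A
  | k'.+1 => gmul (gpow A k') A
  end.
(* \bigcup_{k=1}^n A^k *)
Definition gpow_upto (A : set germ) (n : nat) : set germ :=
  [set g | exists k, (k < n)%N /\ gpow A k g].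

Definition gopen (O : set germ) : Prop :=
  O `<=` GG /\
  forall g, O g -> exists F U, [/\ P F, open U, U `<=` pdom F,
     (germ_of F @` U) g & germ_of F @` U `<=` O].

Definition gcompact (K : set germ) : Prop :=
  K `<=` GG /\
  forall C : set (set germ), (forall O, C O -> gopen O) ->
    (forall g, K g -> exists O, C O /\ O g) ->
    exists s : seq (set germ), (forall O, List.In O s -> C O) /\
      (forall g, K g -> exists O, List.In O s /\ O g).

Definition gnbhd_in (A : set germ) (g : germ) (N : set germ) : Prop :=
  exists O, [/\ gopen O, O g & O `&` A `<=` N].

Definition top_transversal (X : set T) : Prop :=
  exists U, [/\ open U, U `<=` X &
    forall x, exists F, [/\ P F, pdom F x & U (pfun F x)]].

Definition compact_generating_pair (S : set germ) (X : set T) : Prop :=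
  [/\ gcompact S, compact X, top_transversal X &
      forall g, Grestr X g -> exists n,
        gnbhd_in (Grestr X) g (gpow_upto (S `|` ginv S) n)].

Definition compactly_generated : Prop :=
  exists S X, compact_generating_pair S X.

End Germs.

(* Main.v *)
Require Import Defs.
From mathcomp Require Import all_boot all_classical all_reals all_analysis.
Local Open Scope classical_set_scope.

From HB Require Import structures.
From mathcomp Require Import all_boot all_classical all_reals all_analysis.
From mathcomp Require Import all_order all_algebra Rstruct lra.
Set Implicit Arguments. Unset Strict Implicit. Unset Printing Implicit Defensive.
Local Open Scope classical_set_scope.
Local Notation pinv := Defs.pinv.

Module Reg.
Import Order.TTheory GRing.Theory Num.Theory.
Lemma regular (T : topologicalType) : metrizable_space T -> forall (x : T) V, open V -> V x ->
  exists W L, [/\ open W, open (~` L), W x, W `<=` L & L `<=` V].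
Proof.
move=> [d [d0 [dE [dS [dT dO]]]]] x V oV Vx.
have [e [e0 sV]] := (dO V).1 oV x Vx.
exists [set y | (d x y < e/2)%R], [set y | (d x y <= e/2)%R]; split.
- apply/(dO _).2 => z /= hz; exists (e/2 - d x z)%R; split; first by lra.
  move=> y /= hy; have := dT x z y; lra.
- apply/(dO _).2 => z /= /negP; rewrite -ltNge => hz.
  exists (d x z - e/2)%R; split; first by lra.
  move=> y /= hy; have := dT x y z; rewrite (dS y z) => h; apply/negP; rewrite -ltNge; lra.
- by rewrite /= (proj2 (dE x x)) //; lra.
- by move=> y /= hy; lra.
- by move=> y /= hy; apply: sV => /=; lra.
Qed.
End Reg.

Lemma choose_list (A B : Type) (R : A -> B -> Prop) (l : seq A) :
  (forall a, List.In a l -> exists b, R a b) ->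
  exists l' : seq B, (forall a, List.In a l -> exists b, List.In b l' /\ R a b) /\
    (forall b, List.In b l' -> exists a, R a b).
Proof.
elim: l => [|a l IH] h; first by exists [::].
have [l' [hl' hl2]] := IH (fun a' ha' => h a' (or_intror ha')).
have [b hb] := h a (or_introl erefl).
exists (b :: l'); split.
  move=> a' [<-|ha']; first by exists b; split => //; left.
  by have [b' [? ?]] := hl' _ ha'; exists b'; split => //; right.
by move=> b' [<-|/hl2//]; exists a.
Qed.

Section PT.
Variables (T : topologicalType) (x0 : T).
Definition pT : Type := T.
HB.instance Definition _ := Topological.on pT.
HB.instance Definition _ := isPointed.Build pT x0.
Lemma pt_compact_cover (A : set T) : compact A -> @cover_compact T A.
Proof. move=> cA; have h := (@compact_cover pT); have : @compact pT A by []. by rewrite h. Qed.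
End PT.

Section S.
Variable T : topologicalType.
Variable P : set (phom T).
Hypothesis hP : pseudogroup P.

Lemma P_phom F : P F -> is_phom F.
Proof. by case: hP => h _; apply: h. Qed.
Lemma P_inv F : P F -> P (phom_inv F).
Proof. by case: hP => _ [_ [h _]]; apply: h. Qed.
Lemma P_comp F G : P F -> P G -> P (phom_comp F G).
Proof. by case: hP => _ [_ [_ [h _]]]; apply: h. Qed.

Lemma fcont F x : P F -> pdom F x -> pfun F @ x --> pfun F x.
Proof.
move=> /P_phom [od [oc [_ [_ [_ [_ [c _]]]]]]] dx.
move: c; rewrite continuous_open_subspace // => c; apply: c.
by rewrite inE.
Qed.
Lemma icont F y : P F -> pcod F y -> pinv F @ y --> pinv F y.
Proof.
move=> /P_phom [od [oc [_ [_ [_ [_ [_ c]]]]]]] dx.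
move: c; rewrite continuous_open_subspace // => c; apply: c.
by rewrite inE.
Qed.
Lemma pinvK F x : P F -> pdom F x -> pinv F (pfun F x) = x.
Proof. by move=> /P_phom [_ [_ [_ [_ [h _]]]]]; apply: h. Qed.
Lemma pfunK F y : P F -> pcod F y -> pfun F (pinv F y) = y.
Proof. by move=> /P_phom [_ [_ [_ [_ [_ [h _]]]]]]; apply: h. Qed.
Lemma pcodf F x : P F -> pdom F x -> pcod F (pfun F x).
Proof. by move=> /P_phom [_ [_ [h _]]] dx; rewrite -h; exists x. Qed.
Lemma pdomi F y : P F -> pcod F y -> pdom F (pinv F y).
Proof. by move=> /P_phom [_ [_ [_ [h _]]]] dx; rewrite -h; exists y. Qed.
Lemma pdom_open F : P F -> open (pdom F).
Proof. by move=> /P_phom []. Qed.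
Lemma pcod_open F : P F -> open (pcod F).
Proof. by move=> /P_phom [_ []]. Qed.

Lemma germ_eq (F G : phom T) x : (\forall z \near x, pfun F z = pfun G z) ->
  germ_of F x = germ_of G x.
Proof.
move=> H; rewrite /germ_of /germ_at; congr pair; apply/seteqP; split => h /= Hh.
  near=> z => /=; rewrite (near Hh z) // (near H z) //.
near=> z => /=; rewrite (near Hh z) // (near H z) //.
Unshelve. all: by end_near.
Qed.

Lemma germ_inj (F G : phom T) x y : germ_of F x = germ_of G y ->
  x = y /\ \forall z \near x, pfun F z = pfun G z.
Proof.
case=> <- E; split => //.
have : germ_at x (pfun F) (pfun F) by rewrite /germ_at /=; apply: filterE.
by rewrite E.
Qed.

Lemma near_comp (f : T -> T) w y (Q : T -> Prop) : f @ w --> y -> f w = y ->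
  (\forall z \near y, Q z) -> \forall z \near w, Q (f z).
Proof. by move=> c _ h; apply: c. Qed.


Lemma onbhs (A : set T) x : open A -> A x -> nbhs x A.
Proof. by move=> oA Ax; apply: open_nbhs_nbhs. Qed.

Lemma gopen_img (F : phom T) U : P F -> open U -> U `<=` pdom F ->
  gopen P (germ_of F @` U).
Proof.
move=> PF oU sU; split.
  by move=> g [u Uu <-]; exists F, u; split => //; apply: sU.
by move=> g [u Uu <-]; exists F, U; split => //; exists u.
Qed.

Lemma pre_open (G : phom T) W : P G -> open W ->
  open [set x | pdom G x /\ W (pfun G x)].
Proof.
move=> PG oW; rewrite openE => x [dx Wx].
have h1 := onbhs (pdom_open PG) dx.
have h2 : \forall z \near x, W (pfun G z).
  by apply: (fcont PG dx); apply: onbhs.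
by near=> z; split; [apply: (near h1 z) | apply: (near h2 z)].
Unshelve. all: by end_near.
Qed.

Lemma germ_pre_open (G : phom T) O : P G -> gopen P O ->
  open [set x | pdom G x /\ O (germ_of G x)].
Proof.
move=> PG [_ gO]; rewrite openE => x [dx Ox].
have [F [U [PF oU sU [u Uu Eu] sO]]] := gO _ Ox.
have [ux Hn] := germ_inj Eu; subst u.
have h1 := onbhs (pdom_open PG) dx.
have h2 := onbhs oU Uu.
have h3 := nbhs_interior Hn.
near=> z; split; first by apply: (near h1 z).
apply: sO; exists z; first by apply: (near h2 z).
by apply: germ_eq; apply: (near h3 z).
Unshelve. all: by end_near.
Qed.


Lemma inIn (s : seq T) x : x \in s -> List.In x s.
Proof.
elim: s => // a s IH; rewrite inE => /orP [/eqP ->|h]; [by left | by right; apply: IH].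
Qed.

Lemma Inin (s : seq T) x : List.In x s -> x \in s.
Proof. by elim: s => // a s IH [->|h]; rewrite inE ?eqxx // IH ?orbT. Qed.

Definition tB (t : phom T * set T * set T) := t.1.1.
Definition tW (t : phom T * set T * set T) := t.1.2.
Definition tL (t : phom T * set T * set T) := t.2.

Lemma cover_T (Xc : set T) (Good : phom T * set T * set T -> Prop) :
  compact Xc -> (forall x, Xc x -> exists t, Good t /\ open (tW t) /\ tW t x) ->
  exists l, (forall t, List.In t l -> Good t) /\
    forall x, Xc x -> exists t, List.In t l /\ tW t x.
Proof.
move=> cX hx0.
have hx : forall x, exists t, Xc x -> Good t /\ open (tW t) /\ tW t x.
  move=> x; case: (pselect (Xc x)) => Xx.
    by have [t ht] := hx0 x Xx; exists t.
  by exists (phom_id T, set0, set0).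
have [f hf] := choice hx.
case: (pselect (exists x, Xc x)) => [[x0 _]|nX]; last first.
  by exists [::]; split => // x Xx; exfalso; apply: nX; exists x.
move: (pt_compact_cover x0 cX) => /(_ T Xc (fun x => tW (f x))).
case.
- by move=> i Di; case: (hf i Di) => _ [].
- by move=> x Xx; exists x => //; case: (hf x Xx) => _ [].
move=> D' sD' sD; exists (map f (finmap.enum_fset D')); split.
  move=> t /List.in_map_iff [x [<- hx']].
  have : x \in Xc by apply: sD'; apply: Inin.
  by rewrite inE => Xx; case: (hf x Xx).
move=> x /sD [y Dy Wy]; exists (f y); split => //.
by apply: List.in_map; apply: inIn.
Qed.

Definition Og (W : set T) : set (germ T) :=
  [set g | exists F z, [/\ P F, pdom F z, W z & g = germ_of F z]].
Definition Ot (W : set T) : set (germ T) :=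
  [set g | exists F z, [/\ P F, pdom F z, W (pfun F z) & g = germ_of F z]].

Lemma Og_open W : open W -> gopen P (Og W).
Proof.
move=> oW; split; first by move=> g [F [z [PF dz _ ->]]]; exists F, z.
move=> g [F [z [PF dz Wz ->]]]; exists F, (pdom F `&` W); split => //.
- by apply: openI => //; apply: pdom_open.
- by exists z => //; split.
- by move=> g' [y [dy Wy] <-]; exists F, y.
Qed.

Lemma Ot_open W : open W -> gopen P (Ot W).
Proof.
move=> oW; split; first by move=> g [F [z [PF dz _ ->]]]; exists F, z.
move=> g [F [z [PF dz Wz ->]]]; exists F, [set y | pdom F y /\ W (pfun F y)]; split => //.
- by apply: pre_open.
- by move=> y [].
- by exists z => //; split.
- by move=> g' [y [dy Wy] <-]; exists F, y.
Qed.

Lemma germ_val (F G : phom T) x y : germ_of F x = germ_of G y -> pfun F x = pfun G x.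
Proof. by move=> /germ_inj [_ h]; apply: nbhs_singleton h. Qed.

Lemma cover_G (K : set (germ T)) (Good : phom T * set T * set T -> Prop) (orig : bool) :
  gcompact P K -> (forall x, exists t, Good t /\ open (tW t) /\ tW t x) ->
  exists l, (forall t, List.In t l -> Good t) /\
    forall F z, P F -> pdom F z -> K (germ_of F z) ->
      exists t, List.In t l /\ tW t (if orig then z else pfun F z).
Proof.
move=> [sK cK] hx; have [f hf] := choice hx.
pose OO b W := if b then Og W else Ot W.
have OOo b W : open W -> gopen P (OO b W).
  by rewrite /OO; case: b; [apply: Og_open | apply: Ot_open].
have [||s [hs1 hs2]] :=
  cK [set O | exists t, (Good t /\ open (tW t)) /\ O = OO orig (tW t)].
- by move=> O [t [[_ ?] ->]]; apply: OOo.
- move=> g /sK [F [z [PF dz ->]]].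
  exists (OO orig (tW (f (if orig then z else pfun F z)))); split.
    by exists (f (if orig then z else pfun F z)); split => //; case: (hf (if orig then z else pfun F z)) => ? [].
  case: (hf (if orig then z else pfun F z)) => _ [_ Wy].
  have key : forall b, tW (f (if b then z else pfun F z)) (if b then z else pfun F z) ->
    OO b (tW (f (if b then z else pfun F z))) (germ_of F z).
    by case=> Wy'; exists F, z.
  exact: key.
have [l' [hl' hl2]] := @choose_list _ _
  (fun O t => (Good t /\ open (tW t)) /\ O = OO orig (tW t)) s hs1.
exists l'; split; first by move=> t ht; have [Q1 [ [Gt _] _]] := hl2 t ht.
move=> F z PF dz Kg; have [Q1 [sO Og']] := hs2 _ Kg.
have [t [lt [_ EO]]] := hl' _ sO; exists t; split => //.
have key2 : forall b, OO b (tW t) (germ_of F z) -> tW t (if b then z else pfun F z).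
  case => -[F' [z' [_ _ W' E]]].
    by have [-> _] := germ_inj E.
  by have [e _] := germ_inj E; rewrite (germ_val E) e.
by apply: key2; rewrite -EO.
Qed.

Definition cj (B' H B : phom T) := phom_comp B' (phom_comp H (phom_inv B)).

Lemma cj_P B' H B : P B' -> P H -> P B -> P (cj B' H B).
Proof. by move=> h1 h2 h3; apply: P_comp => //; apply: P_comp => //; apply: P_inv. Qed.

Lemma cj_val B' H B w : P B -> pdom B w ->
  pfun (cj B' H B) (pfun B w) = pfun B' (pfun H w).
Proof. by move=> PB dw; rewrite /cj /= (pinvK PB dw). Qed.

Lemma cj_dom B' H B w : P B -> pdom B w -> pdom H w -> pdom B' (pfun H w) ->
  pdom (cj B' H B) (pfun B w).
Proof.
move=> PB dw dH dB'; rewrite /cj /=; rewrite (pinvK PB dw); split => //; split => //.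
exact: pcodf.
Qed.

Lemma near_pinv B w (Q : T -> Prop) : P B -> pdom B w ->
  (\forall z \near w, Q z) -> \forall z \near pfun B w, Q (pinv B z).
Proof.
move=> PB dw hQ; have c := icont PB (pcodf PB dw); rewrite (pinvK PB dw) in c.
exact: c hQ.
Qed.

Lemma near_fun F w (Q : T -> Prop) : P F -> pdom F w ->
  (\forall z \near pfun F w, Q z) -> \forall z \near w, Q (pfun F z).
Proof. by move=> PF dw hQ; exact: (fcont PF dw) hQ. Qed.

Lemma cj_germ B' H H' B w : P B -> pdom B w ->
  (\forall z \near w, pfun H z = pfun H' z) ->
  germ_of (cj B' H B) (pfun B w) = germ_of (cj B' H' B) (pfun B w).
Proof.
move=> PB dw hn; apply: germ_eq.
by apply: filterS (near_pinv PB dw hn) => z /= ->.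
Qed.

Lemma cj_mul Bp Hb Bm Ha B w : P B -> P Bm -> P Ha -> pdom B w -> pdom Ha w ->
  pdom Bm (pfun Ha w) ->
  germ_of (phom_comp (cj Bp Hb Bm) (cj Bm Ha B)) (pfun B w) =
  germ_of (cj Bp (phom_comp Hb Ha) B) (pfun B w).
Proof.
move=> PB PBm PHa dw dHa dBm; apply: germ_eq.
have h1 : \forall v \near w, pdom Bm (pfun Ha v).
  by apply: near_fun => //; apply: onbhs => //; apply: pdom_open.
by apply: filterS (near_pinv PB dw h1) => z /= h; rewrite pinvK.
Qed.

Lemma gpow_left (A : set (germ T)) k : forall q, gpow P A k q ->
  forall (Q Fa : phom T) y, P Q -> P Fa -> pdom Q y -> q = germ_of Q y ->
  pdom Fa (pfun Q y) -> A (germ_of Fa (pfun Q y)) ->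
  gpow P A k.+1 (germ_of (phom_comp Fa Q) y).
Proof.
elim: k => [|k IH] q hq Q Fa y PQ PFa dQ Eq dFa AFa.
  by exists Fa, Q, y; rewrite -Eq; do ! split => //.
case: hq => F' [H' [y' [PF' [PH' [dH' [dF' [AH' [gF' Eq']]]]]]]].
rewrite Eq in Eq'; have [ey hn] := germ_inj Eq'; subst y'.
have ev := germ_val Eq'; rewrite /= in ev.
have IH' := IH _ gF' F' Fa (pfun H' y) PF' PFa dF' erefl.
rewrite -ev in IH'; have {}IH' := IH' dFa AFa.
exists (phom_comp Fa F'), H', y.
split; first exact: P_comp.
do 2 (split => //); split; first by split => //; rewrite /preimage /= -ev.
do 2 (split => //).
by apply: germ_eq; apply: filterS hn => z /= ->.
Qed.

Definition good (U : set T) (t : phom T * set T * set T) :=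
  [/\ P (tB t), open (tW t), open (~` tL t), tW t `<=` tL t &
      tL t `<=` pdom (tB t) /\ forall z, tL t z -> U (pfun (tB t) z)].

Definition E2 (S0 : set (germ T)) Ls : set (germ T) :=
  [set g | exists b b' F z, List.In b Ls /\ List.In b' Ls /\ P F /\ pdom F z /\
     S0 (germ_of F z) /\ tL b z /\ tL b' (pfun F z) /\
     g = germ_of (cj (tB b') F (tB b)) (pfun (tB b) z)].

Section Conj.
Variables (U : set T) (S0 S : set (germ T)) (Ls : seq (phom T * set T * set T)).
Hypothesis hLs : forall t, List.In t Ls -> good U t.
Hypothesis hco : forall F z, P F -> pdom F z -> S0 (germ_of F z) ->
  exists b, List.In b Ls /\ tL b z.
Hypothesis hct : forall F z, P F -> pdom F z -> S0 (germ_of F z) ->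
  exists b, List.In b Ls /\ tL b (pfun F z).
Hypothesis hE : E2 S0 Ls `<=` S.

Lemma gP b : List.In b Ls -> P (tB b).
Proof. by move=> /hLs []. Qed.
Lemma gL b z : List.In b Ls -> tL b z -> pdom (tB b) z.
Proof. by move=> /hLs [_ _ _ _ [h _]]; apply: h. Qed.

Lemma gconj0 g : (S0 `|` ginv P S0) g -> forall H w b, P H -> pdom H w ->
  g = germ_of H w -> List.In b Ls -> tL b w ->
  exists b', List.In b' Ls /\ tL b' (pfun H w) /\
    (S `|` ginv P S) (germ_of (cj (tB b') H (tB b)) (pfun (tB b) w)).
Proof.
move=> [Sg|[F [z [PF dz Sz Eg]]]] H w b PH dw Eg' Lb Lw.
  rewrite Eg' in Sg; have [b' [Lb' Lb'w]] := hct PH dw Sg.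
  exists b'; split => //; split => //; left; apply: hE.
  by exists b, b', H, w.
rewrite Eg' in Eg; have [ew hn] := germ_inj Eg; subst w.
have ev := germ_val Eg; rewrite /= (pinvK PF dz) in ev.
have [b' [Lb' Lb'z]] := hco PF dz Sz.
exists b'; split => //; split; first by rewrite ev.
right.
have PC : P (cj (tB b) F (tB b')) by apply: cj_P => //; apply: gP.
have dC : pdom (cj (tB b) F (tB b')) (pfun (tB b') z).
  by apply: cj_dom => //; [apply: gP | apply: (gL Lb') | apply: (gL Lb)].
exists (cj (tB b) F (tB b')), (pfun (tB b') z); split => //.
  by apply: hE; exists b', b, F, z.
rewrite (cj_val _ _ (gP Lb') (gL Lb' Lb'z)).
have -> : germ_of (phom_inv (cj (tB b) F (tB b'))) (pfun (tB b) (pfun F z)) =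
  germ_of (cj (tB b') (phom_inv F) (tB b)) (pfun (tB b) (pfun F z)) by [].
by apply: cj_germ; [exact: gP | exact: (gL Lb) | exact: hn].
Qed.

Lemma gconj k : forall g, gpow P (S0 `|` ginv P S0) k g -> forall H w b, P H -> pdom H w ->
  g = germ_of H w -> List.In b Ls -> tL b w ->
  exists b', List.In b' Ls /\ tL b' (pfun H w) /\
    gpow P (S `|` ginv P S) k (germ_of (cj (tB b') H (tB b)) (pfun (tB b) w)).
Proof.
elim: k => [|k IH]; first exact: gconj0.
move=> g [F1 [H1 [y [PF1 [PH1 [dH1 [dF1 [bH1 [gF1 Eg]]]]]]]]] H w b PH dw Eg' Lb Lw.
rewrite Eg' in Eg; have [ew hn] := germ_inj Eg; subst y.
have ev := germ_val Eg; rewrite /= in ev.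
have [b2 [Lb2 [Lb2w bC]]] := gconj0 bH1 PH1 dH1 erefl Lb Lw.
have [b' [Lb' [Lb'w gC]]] := IH _ gF1 F1 (pfun H1 w) b2 PF1 dF1 erefl Lb2 Lb2w.
exists b'; split => //; split; first by rewrite ev.
exists (cj (tB b') F1 (tB b2)), (cj (tB b2) H1 (tB b)), (pfun (tB b) w).
split; first by apply: cj_P => //; apply: gP.
split; first by apply: cj_P => //; apply: gP.
split; first by apply: cj_dom => //; [apply: gP|apply: (gL Lb)|apply: (gL Lb2)].
rewrite (cj_val _ _ (gP Lb) (gL Lb Lw)).
split; first by apply: cj_dom => //; [apply: gP|apply: (gL Lb2)|apply: (gL Lb')].
split => //; split => //.
rewrite cj_mul //; [|apply: gP|apply: gP|apply: (gL Lb)|apply: (gL Lb2)].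
  by apply: cj_germ; [exact: gP| exact: (gL Lb)| exact: hn].
all: done.
Qed.

End Conj.

Lemma gcompactU (A B : set (germ T)) : gcompact P A -> gcompact P B ->
  gcompact P (A `|` B).
Proof.
move=> [sA cA] [sB cB]; split; first by move=> g [/sA|/sB].
move=> C hC hcov.
have [sa [ha1 ha2]] := cA C hC (fun g Ag => hcov g (or_introl Ag)).
have [sb [hb1 hb2]] := cB C hC (fun g Bg => hcov g (or_intror Bg)).
exists (sa ++ sb); split.
  by move=> O /List.in_app_iff [/ha1|/hb1].
move=> g [/ha2|/hb2] [Q [hO Og]]; exists Q; split => //.
  by apply/List.in_app_iff; left.
by apply/List.in_app_iff; right.
Qed.

Lemma gcompact_list (I : Type) (l : seq I) (A : I -> set (germ T)) :
  (forall i, List.In i l -> gcompact P (A i)) ->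
  gcompact P [set g | exists i, List.In i l /\ A i g].
Proof.
elim: l => [|i l IH] h.
  split; first by move=> g [? [] ].
  by move=> C _ _; exists [::]; split => // g [? [] ].
have := gcompactU (h i (or_introl erefl)) (IH (fun j hj => h j (or_intror hj))).
have -> : A i `|` [set g | exists j, List.In j l /\ A j g] =
          [set g | exists j, List.In j (i :: l) /\ A j g].
  apply/seteqP; split => g.
    by case=> [Ag|[j [hj Ag]]]; [exists i; split => //; left | exists j; split => //; right].
  by case=> j [[<-|hj] Ag]; [left | right; exists j].
done.
Qed.

Definition E2p (S0 : set (germ T)) b b' : set (germ T) :=
  [set g | exists F z, P F /\ pdom F z /\ S0 (germ_of F z) /\ tL b z /\
     tL b' (pfun F z) /\ g = germ_of (cj (tB b') F (tB b)) (pfun (tB b) z)].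

Lemma E2p_compact U U' S0 b b' : gcompact P S0 -> good U b -> good U' b' ->
  gcompact P (E2p S0 b b').
Proof.
move=> [sS cS] [PB _ oLc _ [sL _]] [PB' _ oLc' _ [sL' _]].
split.
  move=> g [F [z [PF [dz [_ [Lz [Lz' ->]]]]]]].
  exists (cj (tB b') F (tB b)), (pfun (tB b) z); split => //.
    by apply: cj_P.
  by apply: cj_dom => //; [apply: sL | apply: sL'].
move=> C hC hcov.
case: (pselect (exists Q, C Q)) => [[Q0 CQ0]|nC]; last first.
  exists [::]; split => // g /hcov [Q [CQ _]]; exfalso; apply: nC; by exists Q.
pose Os Q := [set g | exists F z, P F /\ pdom F z /\ pdom (tB b) z /\
  pdom (tB b') (pfun F z) /\ Q (germ_of (cj (tB b') F (tB b)) (pfun (tB b) z)) /\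
  g = germ_of F z].
have Os_open Q : gopen P Q -> gopen P (Os Q).
  move=> gQ; split; first by move=> g [F [z [PF [dz [_ [_ [_ ->]]]]]]]; exists F, z.
  move=> g [F [z [PF [dz [dB [dB' [Qc ->]]]]]]].
  pose V := [set v | pdom (cj (tB b') F (tB b)) v /\ Q (germ_of (cj (tB b') F (tB b)) v)].
  have oV : open V by apply: germ_pre_open => //; apply: cj_P.
  exists F, ([set x | pdom F x /\ pdom (tB b') (pfun F x)] `&`
             [set x | pdom (tB b) x /\ V (pfun (tB b) x)]); split => //.
  - by apply: openI; apply: pre_open => //; apply: pdom_open.
  - by move=> x [ [] ].
  - exists z => //; split => //; split => //; split => //.
    by apply: cj_dom.
  - move=> g' [x [ [dx dx'] [dBx [_ Qx] ] ] <-]; exists F, x.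
    by do 5 (split => //).
have [||s [hs1 hs2]] := cS [set Q | (exists Q', C Q' /\ Q = Os Q') \/
   Q = Og (~` tL b) \/ Q = Ot (~` tL b')].
- move=> Q [ [Q' [CQ' ->] ] | [->|->] ].
  + by apply: Os_open; apply: hC.
  + exact: Og_open.
  + exact: Ot_open.
- move=> g Sg0; have [F [z [PF dz Eg]]] := sS _ Sg0; subst g.
  case: (pselect (tL b z)) => Lz; last first.
    by exists (Og (~` tL b)); split; [right; left | exists F, z].
  case: (pselect (tL b' (pfun F z))) => Lz'; last first.
    by exists (Ot (~` tL b')); split; [right; right | exists F, z].
  have Sg : E2p S0 b b' (germ_of (cj (tB b') F (tB b)) (pfun (tB b) z)).
    by exists F, z.
  have [Q [CQ Qg]] := hcov _ Sg.
  exists (Os Q); split; first by left; exists Q.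
  exists F, z; split => //; split => //; split; first exact: sL.
  by split; first exact: sL'.
- have hR : forall Q, List.In Q s -> exists Q', C Q' /\ (Q = Os Q' \/
     Q = Og (~` tL b) \/ Q = Ot (~` tL b')).
    move=> Q /hs1 [ [Q' [CQ' ->] ] | [->|->] ].
    + by exists Q'; split => //; left.
    + by exists Q0; split => //; right; left.
    + by exists Q0; split => //; right; right.
  have [l' [hl' hl2]] := choose_list hR.
  exists l'; split; first by move=> Q /hl2 [Q' [CQ _]].
  move=> g [F [z [PF [dz [Sz [Lz [Lz' ->]]]]]]].
  have [Q [sQ Qs]] := hs2 _ Sz.
  have [Q' [lQ [CQ HQ]]] := hl' _ sQ; exists Q'; split => //.
  case: HQ => [EQ|[EQ|EQ]]; rewrite EQ in Qs.
  + case: Qs => F' [z' [PF' [dz' [dB [dB' [Qc E]]]]]]; have [ez hn] := germ_inj E; subst z'.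
    by rewrite (cj_germ _ PB (sL _ Lz) hn).
  + by case: Qs => F' [z' [_ _ nL E]]; have [ez _] := germ_inj E; subst z'.
  + case: Qs => F' [z' [_ _ nL E]]; have [ez _] := germ_inj E; subst z'.
    by rewrite (germ_val E) in Lz'.
Qed.

Definition E1p (X : set T) k b : set (germ T) :=
  [set g | exists x, X x /\ tL k x /\ tL b (pfun (tB k) x) /\
     g = germ_of (phom_comp (tB b) (tB k)) x].

Lemma E1p_compact U U' X k b : compact X -> good U k -> good U' b ->
  gcompact P (E1p X k b).
Proof.
move=> cX [PK _ oLk _ [sK _]] [PB _ oLb _ [sB _]].
set G := phom_comp (tB b) (tB k).
have PG : P G by apply: P_comp.
have dG x : tL k x -> tL b (pfun (tB k) x) -> pdom G x.
  by move=> h1 h2; split; [apply: sK | apply: sB].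
split.
  by move=> g [x [_ [Lx [Lx' ->]]]]; exists G, x; split => //; apply: dG.
move=> C hC hcov.
case: (pselect (exists Q, C Q)) => [[Q0 CQ0]|nC]; last first.
  exists [::]; split => // g /hcov [Q [CQ _]]; exfalso; apply: nC; by exists Q.
pose V Q := [set x | pdom G x /\ Q (germ_of G x)].
pose N2 := [set x | pdom (tB k) x /\ (~` tL b) (pfun (tB k) x)].
pose Good (t : phom T * set T * set T) :=
  (exists Q, C Q /\ tW t = V Q) \/ tW t = ~` tL k \/ tW t = N2.
have hx : forall x, X x -> exists t, Good t /\ open (tW t) /\ tW t x.
  move=> x Xx; case: (pselect (tL k x)) => Lx; last first.
    by exists (phom_id T, ~` tL k, set0); split; [right; left | split].
  case: (pselect (tL b (pfun (tB k) x))) => Lx'; last first.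
    exists (phom_id T, N2, set0); split; first by right; right.
    split; first by apply: pre_open.
    by split => //; apply: sK.
  have [Q [CQ Qg]] := hcov (germ_of G x) (ex_intro _ x (conj Xx (conj Lx (conj Lx' erefl)))).
  exists (phom_id T, V Q, set0); split; first by left; exists Q.
  split; first by apply: germ_pre_open => //; apply: hC.
  by split => //; apply: dG.
have [l [hl1 hl2]] := cover_T cX hx.
have hR : forall t, List.In t l -> exists Q, C Q /\
    (tW t = V Q \/ tW t = ~` tL k \/ tW t = N2).
  move=> t /hl1 [ [Q [CQ ->] ] | [->|->] ].
  - by exists Q; split => //; left.
  - by exists Q0; split => //; right; left.
  - by exists Q0; split => //; right; right.
have [l' [hl' hl3]] := choose_list hR.
exists l'; split; first by move=> Q /hl3 [t [CQ _]].
move=> g [x [Xx [Lx [Lx' ->]]]].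
have [t [lt Wt]] := hl2 x Xx.
have [Q [lQ [CQ HQ]]] := hl' _ lt; exists Q; split => //.
case: HQ => EQ; first by rewrite EQ in Wt; case: Wt.
by case: EQ => EQ; rewrite EQ in Wt; [|case: Wt].
Qed.

Lemma good_ex (hm : metrizable_space T) U : open U ->
  (forall x, exists F, [/\ P F, pdom F x & U (pfun F x)]) ->
  forall y, exists t, good U t /\ open (tW t) /\ tW t y.
Proof.
move=> oU orb y; have [F [PF dy Uy]] := orb y.
have oV := pre_open PF oU.
have [W [L [oW oL Wy sWL sLV]]] := Reg.regular hm oV (conj dy Uy).
exists (F, W, L); split; last by [].
split => //; split; first by move=> z /sLV [].
by move=> z /sLV [].
Qed.

End S.





Unset Implicit Arguments.
Theorem proposition2p3p2 (T : topologicalType) (P : set (phom T)) :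
  loc_compact_space T -> metrizable_space T -> pseudogroup P ->
  compactly_generated P ->
  forall X : set T, compact X -> top_transversal P X ->
  exists S : set (germ T), S `<=` Grestr P X /\ compact_generating_pair P S X.
Proof.
move=> _ hm hP [S0 [X0 [cS0 cX0 [U0 [oU0 sU0 orb0]] gen0]]] X cX tX.
have tX' := tX; case: tX' => U [oU sUX orb].
have gexU := good_ex hP hm oU orb.
have [l1 [h11 h12]] := cover_T cX0 (fun x _ => gexU x).
have [l2 [h21 h22]] := cover_G hP true cS0 gexU.
have [l3 [h31 h32]] := cover_G hP false cS0 gexU.
pose Ls := l1 ++ l2 ++ l3.
have hLs : forall t, List.In t Ls -> good P U t.
  by move=> t /List.in_app_iff [/h11 //|/List.in_app_iff [/h21 //|/h31 //]].
have WL : forall t, good P U t -> tW t `<=` tL t by move=> t [].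
have hco : forall F z, P F -> pdom F z -> S0 (germ_of F z) ->
    exists b, List.In b Ls /\ tL b z.
  move=> F z PF dz Sz; have [t [lt Wt]] := h22 F z PF dz Sz.
  exists t; split; first by apply/List.in_app_iff; right; apply/List.in_app_iff; left.
  by apply: (WL t (h21 t lt)).
have hct : forall F z, P F -> pdom F z -> S0 (germ_of F z) ->
    exists b, List.In b Ls /\ tL b (pfun F z).
  move=> F z PF dz Sz; have [t [lt Wt]] := h32 F z PF dz Sz.
  exists t; split; first by apply/List.in_app_iff; right; apply/List.in_app_iff; right.
  by apply: (WL t (h31 t lt)).
have hX0 : forall z, X0 z -> exists b, List.In b Ls /\ tL b z.
  move=> z Xz; have [t [lt Wt]] := h12 z Xz.
  exists t; split; first by apply/List.in_app_iff; left.
  by apply: (WL t (h11 t lt)).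
have [Ks [hK1 hK2]] := cover_T cX (fun x _ => good_ex hP hm oU0 orb0 x).
pose S := [set g | exists k, List.In k Ks /\ (fun k => [set g | exists b, List.In b Ls /\ E1p X k b g]) k g] `|`
          [set g | exists b, List.In b Ls /\ (fun b => [set g | exists b', List.In b' Ls /\ E2p P S0 b b' g]) b g].
have hE : E2 P S0 Ls `<=` S.
  move=> g [b [b' [F [z [lb [lb' H]]]]]]; right; exists b; split => //.
  by exists b'; split => //; exists F, z.
exists S; split.
  move=> g [ [k [lk [b [lb [x [Xx [Lx [Lx' ->]]]]]]]] | [b [lb [b' [lb' [F [z [PF [dz [Sz [Lz [Lz' ->]]]]]]]]]]] ].
    have [PK _ _ _ [sK hK]] := hK1 _ lk; have [PB _ _ _ [sB hB]] := hLs _ lb.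
    exists (phom_comp (tB b) (tB k)), x; split => //.
    - exact: P_comp.
    - by split; [apply: sK | exact: (sB _ Lx')].
    - by apply: sUX; apply: hB.
  have [PB _ _ _ [sB hB]] := hLs _ lb; have [PB' _ _ _ [sB' hB']] := hLs _ lb'.
  exists (cj (tB b') F (tB b)), (pfun (tB b) z); split => //.
  - exact: cj_P.
  - by apply: (cj_dom hP); [exact: PB | exact: (sB _ Lz) | exact: dz | exact: (sB' _ Lz')].
  - by apply: sUX; apply: hB.
  - by rewrite (cj_val hP _ _ PB (sB _ Lz)); apply: sUX; apply: hB'.
split => //.
  apply: gcompactU; apply: gcompact_list => i hi; apply: gcompact_list => j hj.
    by apply: (E1p_compact hP cX (hK1 _ hi) (hLs _ hj)).
  by apply: (E2p_compact hP cS0 (hLs _ hi) (hLs _ hj)).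
move=> g [F [x [PF dx Xx XFx ->]]].
have [kj [lkj Wkj]] := hK2 x Xx; have [kl [lkl Wkl]] := hK2 _ XFx.
have [PAj oWj _ sWLj [sLj Lj]] := hK1 _ lkj.
have [PAl oWl _ sWLl [sLl Ll]] := hK1 _ lkl.
have PH : P (cj (tB kl) F (tB kj)) by apply: cj_P.
have key : forall x', pdom F x' -> tW kj x' -> tW kl (pfun F x') ->
    pdom (cj (tB kl) F (tB kj)) (pfun (tB kj) x') /\
    Grestr P X0 (germ_of (cj (tB kl) F (tB kj)) (pfun (tB kj) x')) /\
    pfun (cj (tB kl) F (tB kj)) (pfun (tB kj) x') = pfun (tB kl) (pfun F x').
  move=> x' dx' Wj' Wl'.
  have dAj : pdom (tB kj) x' by apply: sLj; apply: sWLj.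
  have dAl : pdom (tB kl) (pfun F x') by apply: sLl; apply: sWLl.
  have dH : pdom (cj (tB kl) F (tB kj)) (pfun (tB kj) x') by apply: (cj_dom hP).
  have ev := cj_val hP (tB kl) F PAj dAj.
  split => //; split => //.
  exists (cj (tB kl) F (tB kj)), (pfun (tB kj) x'); split => //.
    by apply: sU0; apply: Lj; apply: sWLj.
  by rewrite ev; apply: sU0; apply: Ll; apply: sWLl.
have [h0d [h0G h0v]] := key x dx Wkj Wkl.
have [n [Oh [gOh Ohh sOh]]] := gen0 _ h0G.
have oV' := germ_pre_open hP PH gOh.
pose V := ([set z | pdom F z /\ tW kl (pfun F z)] `&` tW kj) `&`
  [set z | pdom (tB kj) z /\ (pdom (cj (tB kl) F (tB kj)) (pfun (tB kj) z) /\
     Oh (germ_of (cj (tB kl) F (tB kj)) (pfun (tB kj) z)))].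
have oV : open V.
  apply: openI; first by apply: openI => //; apply: (pre_open hP).
  exact: (pre_open hP PAj oV').
exists n.+2, (germ_of F @` V); split.
- by apply: gopen_img => // z [ [ [] ] ].
- exists x => //; split; first by split => //.
  by split; [apply: sLj; apply: sWLj | split].
move=> g' [ [x' Vx' <-] Gg'].
case: Vx' => [ [ [dx' Wl'] Wj'] [dAj' [dH' Oh'] ] ].
have XFx' : X x' /\ X (pfun F x').
  case: Gg' => F2 [x2 [PF2 dx2 Xx2 XF2 E]]; have [e2 _] := germ_inj E; subst x2.
  by rewrite (germ_val E).
case: XFx' => Xx' XFx'.
have [_ [hG' hv']] := key x' dx' Wj' Wl'.
have [k [kn gk]] := sOh _ (conj Oh' hG').
have X0w' : X0 (pfun (tB kj) x') by apply: sU0; apply: Lj; apply: sWLj.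
have [b [lb Lbw]] := hX0 _ X0w'.
have [b' [lb' [Lb'w gC]]] := gconj hP hLs hco hct hE gk PH dH' erefl lb Lbw.
have [PB _ _ _ [sB hB]] := hLs _ lb; have [PB' _ _ _ [sB' hB']] := hLs _ lb'.
pose C := cj (tB b') (cj (tB kl) F (tB kj)) (tB b).
pose E := phom_comp (tB b) (tB kj).
have dBw : pdom (tB b) (pfun (tB kj) x') by apply: sB.
have PC : P C by apply: cj_P.
have PE : P E by apply: P_comp.
have dE : pdom E x' by split.
have dC : pdom C (pfun E x').
  by apply: (cj_dom hP); [exact: PB | exact: dBw | exact: dH' | exact: (sB' _ Lb'w)].
have SE : S (germ_of E x').
  left; exists kj; split => //; exists b; split => //; exists x'; split => //.
  by split; [apply: sWLj | split].
have g1 : gpow P (S `|` ginv P S) k.+1 (germ_of (phom_comp C E) x').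
  exists C, E, x'; split; first exact: PC. split; first exact: PE.
  split; first exact: dE. split; first exact: dC. split; first by left.
  by split; first exact: gC.
pose Fa := phom_comp (tB b') (tB kl).
have PFa : P Fa by apply: P_comp.
have dAl' : pdom (tB kl) (pfun F x') by apply: sLl; apply: sWLl.
have dB2 : pdom (tB b') (pfun (tB kl) (pfun F x')) by rewrite -hv'; apply: sB'.
have dFa : pdom Fa (pfun F x') by split.
have vQ : pfun (phom_comp C E) x' = pfun Fa (pfun F x').
  by rewrite /C /E /Fa /cj /= (pinvK hP PB dBw) (pinvK hP PAj dAj').
have SFa : S (germ_of Fa (pfun F x')).
  left; exists kl; split => //; exists b'; split => //; exists (pfun F x'); split => //.
  by split; [apply: sWLl | split => //; rewrite -hv'].
have g2 := gpow_left hP g1 (Q := phom_comp C E) (Fa := phom_inv Fa) (y := x')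
  (P_comp hP PC PE) (P_inv hP PFa) (conj dE dC) erefl.
have := g2 _ _; rewrite vQ => /(_ (pcodf hP PFa dFa)) g3.
have {g3} g3 : gpow P (S `|` ginv P S) k.+2
    (germ_of (phom_comp (phom_inv Fa) (phom_comp C E)) x').
  apply: g3; right; exists Fa, (pfun F x'); split => //.
exists k.+2; split; first by [].
have -> // : germ_of F x' = germ_of (phom_comp (phom_inv Fa) (phom_comp C E)) x'.
apply: germ_eq.
have n1 : \forall z \near x', pdom (tB kj) z by apply: onbhs => //; apply: (pdom_open hP).
have n2 : \forall z \near x', pdom (tB b) (pfun (tB kj) z).
  by apply: (near_fun hP PAj dAj'); apply: onbhs => //; apply: (pdom_open hP).
have n3 : \forall z \near x', pdom (tB kl) (pfun F z).
  by apply: (near_fun hP PF dx'); apply: onbhs => //; apply: (pdom_open hP).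
have n4 : \forall z \near x', pdom (tB b') (pfun (tB kl) (pfun F z)).
  apply: (near_fun hP PF dx' (Q := fun v => pdom (tB b') (pfun (tB kl) v))).
  by apply: (near_fun hP PAl dAl'); apply: onbhs => //; apply: (pdom_open hP).
near=> z; rewrite /C /E /Fa /cj /=.
have m1 : pdom (tB kj) z by apply: (near n1 z).
have m2 : pdom (tB b) (pfun (tB kj) z) by apply: (near n2 z).
have m3 : pdom (tB kl) (pfun F z) by apply: (near n3 z).
have m4 : pdom (tB b') (pfun (tB kl) (pfun F z)) by apply: (near n4 z).
rewrite (pinvK hP PB m2) (pinvK hP PAj m1).
by rewrite (pinvK hP PB' m4) (pinvK hP PAl m3).
Unshelve. all: by end_near.
Qed.
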